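(* The category $\mathbf{StoneLPries}$ of Stone L-spaces and all L-morphisms between them is a full subcategory of the category $\mathbf{CohLPries}$ of coherent L-spaces and coherent L-morphisms; that is, every Stone L-space is a coherent L-space and every L-morphism between Stone L-spaces is coherent.
   Context: A Priestley space is a Stone space $X$ with a partial order such that clopen upsets separate points. An L-space is a Priestley space in which the downset of each clopen set is clopen and the closure of each open upset is open. ${\sf ClopUp}(X)$ is the set of clopen upsets; $\mathrm{cl}$ denotes closure. An L-morphism is a continuous order-preserving map $f:X\to X'$ between L-spaces with $f^{-1}(\mathrm{cl}\,U)=\mathrm{cl}\,f^{-1}(U)$ for every open upset $U$ of $X'$. The spatial part of $X$ is $Y=\{y\in X\mid{\downarrow}y\text{ clopen}\}$. A Scott upset is a closed upset $F$ with $\min F\subseteq Y$; ${\sf ClopSUp}(X)$ is the set of clopen Scott upsets. A biset is a set that is both an upset and a downset; ${\sf ClopBi}(X)$ is the set of clopen bisets. For $U,V\in{\sf ClopUp}(X)$, $V\ll U$ means that for every open upset $W$, $U\subseteq\mathrm{cl}\,W$ implies $V\subseteq W$; $\ker U=\bigcup\{V\in{\sf ClopUp}(X)\mid V\ll U\}$; $\mathrm{core}\,U=\bigcup\{V\in{\sf ClopSUp}(X)\mid V\subseteq U\}$; $\mathrm{cen}\,U=\bigcup\{V\in{\sf ClopBi}(X)\mid V\subseteq U\}$. $X$ is L-compact if $X=\ker X$. A Stone L-space is an L-compact L-space with $\mathrm{cen}\,U$ dense in $U$ for each $U\in{\sf ClopUp}(X)$. A coherent L-space is an L-compact L-space with $\mathrm{core}\,U$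 dense in $U$ for each $U\in{\sf ClopUp}(X)$ and $\ker(U\cap V)=\ker U\cap\ker V$ for all $U,V\in{\sf ClopUp}(X)$. An L-morphism $f:X_1\to X_2$ is coherent if $f^{-1}(\mathrm{core}\,U)\subseteq\mathrm{core}\,f^{-1}(U)$ for all $U\in{\sf ClopUp}(X_2)$. *)

(* Defs.v *)
From HB Require Import structures.
From mathcomp Require Import all_boot all_order.
From mathcomp Require Import boolp classical_sets topology.
Set Implicit Arguments. Unset Strict Implicit. Unset Printing Implicit Defensive.
Local Open Scope classical_set_scope.

Section Defs.
Context {X : topologicalType} (le : X -> X -> Prop).

Definition partial_order := [/\ forall x, le x x,
  forall x y, le x y -> le y x -> x = y &
  forall x y z, le x y -> le y z -> le x z].

Definition upset (A : set X) := forall x y, A x -> le x y -> A y.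
Definition downset (A : set X) := forall x y, A y -> le x y -> A x.
Definition down (A : set X) : set X := [set x | exists2 y, A y & le x y].

Definition stone_space := [/\ compact [set: X], hausdorff_space X & zero_dimensional X].

Definition priestley_space := [/\ stone_space, partial_order &
  forall x y, ~ le x y -> exists U : set X, [/\ clopen U, upset U, U x & ~ U y]].

Definition L_space := [/\ priestley_space,
  forall U : set X, clopen U -> clopen (down U) &
  forall U : set X, open U -> upset U -> open (closure U)].

Definition ClopUp (U : set X) := clopen U /\ upset U.

Definition spatial : set X := [set y | clopen (down [set y])].

Definition minimal_elts (F : set X) : set X :=
  [set x | F x /\ forall y, F y -> le y x -> y = x].

Definition ScottUp (F : set X) := [/\ closed F, upset F & minimal_elts F `<=` spatial].
Definition ClopSUp (U : set X) := clopen U /\ ScottUp U.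
Definition ClopBi (U : set X) := [/\ clopen U, upset U & downset U].

Definition waybelow (V U : set X) :=
  forall W : set X, open W -> upset W -> U `<=` closure W -> V `<=` W.

Definition ker (U : set X) : set X :=
  [set x | exists V, [/\ ClopUp V, waybelow V U & V x]].
Definition core (U : set X) : set X :=
  [set x | exists V, [/\ ClopSUp V, V `<=` U & V x]].
Definition cen (U : set X) : set X :=
  [set x | exists V, [/\ ClopBi V, V `<=` U & V x]].

Definition L_compact := [set: X] = ker [set: X].

(* "A dense in U" (A a subset of U): U is contained in the closure of A *)
Definition stone_L_space := [/\ L_space, L_compact &
  forall U, ClopUp U -> U `<=` closure (cen U)].

Definition coherent_L_space := [/\ L_space, L_compact,
  (forall U, ClopUp U -> U `<=` closure (core U)) &
  (forall U V, ClopUp U -> ClopUp V -> ker (U `&` V) = ker U `&` ker V)].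
End Defs.

Definition L_morphism {X X' : topologicalType} (le : X -> X -> Prop)
  (le' : X' -> X' -> Prop) (f : X -> X') :=
  [/\ continuous f, (forall x y, le x y -> le' (f x) (f y)) &
   forall U : set X', open U -> upset le' U ->
     f @^-1` (closure U) = closure (f @^-1` U)].

Definition coherent_morphism {X1 X2 : topologicalType} (le1 : X1 -> X1 -> Prop)
  (le2 : X2 -> X2 -> Prop) (f : X1 -> X2) :=
  forall U : set X2, ClopUp le2 U -> f @^-1` (core le2 U) `<=` core le1 (f @^-1` U).

(* Main.v *)
Require Import Defs.
From mathcomp Require Import all_boot all_order.
From mathcomp Require Import boolp classical_sets topology.
Import Defs.
Set Implicit Arguments. Unset Strict Implicit. Unset Printing Implicit Defensive.
Local Open Scope classical_set_scope.

Section Priestley.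
Context {X : topologicalType} (le : X -> X -> Prop) (hP : priestley_space le).

Lemma down_closed c : closed (down le [set c]).
Proof.
case: hP => _ [_ _ _] sep.
rewrite -openC.
have -> : ~` down le [set c] =
    \bigcup_(U in [set U | ClopUp le U /\ ~ U c]) U.
  apply/seteqP; split => z.
    move=> nz; have nle : ~ le z c by move=> h; apply: nz; exists c.
    have [U [cU uU Uz nUc]] := sep _ _ nle.
    by exists U.
  move=> [U [[_ uU] nUc] Uz] [w /= -> lezw]; apply: nUc; exact: uU Uz lezw.
apply: bigcup_open => U [[[o _] _] _]; exact: o.
Qed.

Lemma min_exists F a : closed F -> F a ->
  exists m, minimal_elts le F m /\ le m a.
Proof.
case: hP => [[hC _ _]] [lerefl leanti letrans] _ cF Fa.
pose T := {z : X | F z /\ le z a}.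
pose R := fun s t : T => `[< le (sval t) (sval s) >].
have [| | | | t tmax] := @Zorn T R.
- by move=> s; apply/asboolP; apply: lerefl.
- move=> r s t /asboolP h1 /asboolP h2; apply/asboolP; exact: letrans h2 h1.
- move=> [s ps] [t pt] /asboolP h1 /asboolP h2; apply: eq_exist; exact: leanti.
- move=> A Atot.
  case: (pselect (A !=set0)) => [[s0 As0]|A0]; last first.
    exists (exist _ a (conj Fa (lerefl a))) => s As; exfalso; apply: A0.
    by exists s.
  pose B := fun c : T => F `&` down le [set sval c].
  have FG : Filter (filter_from A B).
    apply: filter_from_filter; first by exists s0.
    move=> i j Ai Aj; case: (Atot _ _ Ai Aj) => /asboolP h.
      exists j => //; move=> z [Fz [w /= -> lezw]]; split; split => //.
        by exists (sval i) => //; exact: letrans lezw h.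
      by exists (sval j).
    exists i => //; move=> z [Fz [w /= -> lezw]]; split; split => //.
      by exists (sval i).
    by exists (sval j) => //; exact: letrans lezw h.
  have PG : ProperFilter (filter_from A B).
    apply: filter_from_proper => i _; exists (sval i); split.
      by case: (svalP i).
    by exists (sval i) => //; apply: lerefl.
  have [p [_ clp]] := hC _ PG (filterT).
  rewrite clusterE in clp.
  have pB : forall c, A c -> B c p.
    move=> c Ac.
    have cB : closed (B c) by apply: closedI => //; exact: down_closed.
    rewrite (closure_id (B c)).1 //; apply: clp.
    by exists c.
  have [Fp [w /= -> lepw]] := pB _ As0.
  have lepa : le p a by apply: letrans lepw _; case: (svalP s0).
  exists (exist _ p (conj Fp lepa)) => s As; apply/asboolP => /=.
  by have [_ [w' /= -> h]] := pB _ As.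
- exists (sval t); split; last by case: (svalP t).
  split; first by case: (svalP t).
  move=> y Fy leyt.
  have yT : F y /\ le y a by split => //; apply: letrans leyt _; case: (svalP t).
  have := tmax (exist _ y yT).
  by move=> /(_ (introT (asboolP _) leyt)) /(congr1 sval).
Qed.

End Priestley.

Section StoneL.
Context {X : topologicalType} (le : X -> X -> Prop) (hX : stone_L_space le).

Lemma Lc_full W : open W -> upset le W -> [set: X] `<=` closure W ->
  forall x, W x.
Proof.
case: hX => _ Lc _ oW uW sW x.
have : ker le [set: X] x by rewrite -Lc.
case=> V [_ wb Vx]; exact: wb oW uW sW _ Vx.
Qed.

Lemma biset_wb C W : ClopBi le C -> open W -> upset le W ->
  C `<=` closure W -> C `<=` W.
Proof.
move=> [[_ cC] uC dC] oW uW sub.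
pose W' := W `|` ~` C.
have oW' : open W' by apply: openU => //; exact: closed_openC.
have uW' : upset le W'.
  move=> x y [Wx|nCx] lexy; first by left; exact: uW Wx lexy.
  by right => Cy; apply: nCx; exact: dC Cy lexy.
have full : [set: X] `<=` closure W'.
  move=> z _; case: (pselect (C z)) => Cz.
    by apply: (closureS (@subsetUl _ W (~` C))); exact: sub.
  by apply: subset_closure; right.
move=> z Cz; case: (Lc_full oW' uW' full z) => // /(_ Cz).
Qed.

Lemma cen_open U : open (cen le U).
Proof.
have -> : cen le U = \bigcup_(V in [set V | ClopBi le V /\ V `<=` U]) V.
  apply/seteqP; split => x.
    by case=> V [cb sub Vx]; exists V.
  by case=> V [cb sub] Vx; exists V.
apply: bigcup_open => V [[[o _] _ _] _]; exact: o.
Qed.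

Lemma cen_up U : upset le (cen le U).
Proof.
move=> x y [V [cb sub Vx]] lexy; exists V; split => //.
by case: cb => _ uV _; exact: uV Vx lexy.
Qed.

Lemma ker_cen U : ClopUp le U -> ker le U `<=` cen le U.
Proof.
case: hX => _ _ dens hU x [V [_ wb Vx]].
exact: wb (cen le U) (@cen_open U) (@cen_up U) (dens _ hU) _ Vx.
Qed.

Lemma bi_sup V : ClopBi le V -> ClopSUp le V.
Proof.
case: hX => [[[[_ hH _] _ _] _ _] _ _].
move=> [cV uV dV]; split => //; split => //; first by case: cV.
move=> y [Vy ym].
have dy : down le [set y] = [set y].
  apply/seteqP; split => z.
    move=> [w /= -> lezy]; apply: ym => //; exact: dV Vy lezy.
  move=> /= ->; exists y => //; case: hX => [[[_ [lr _ _] _] _ _] _ _].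
  exact: lr.
rewrite /spatial /= dy; split; last first.
  apply: accessible_closed_set1; apply: hausdorff_accessible; exact: hH.
pose W := ~` [set y].
have oW : open W.
  apply: closed_openC; apply: accessible_closed_set1; apply: hausdorff_accessible; exact: hH.
have uW : upset le W.
  move=> x z Wx lexz zy; apply: Wx; rewrite zy in lexz.
  apply: ym => //; exact: dV Vy lexz.
have ncl : ~ closure W y.
  move=> cly.
  have full : [set: X] `<=` closure W.
    move=> z _; case: (pselect (z = y)) => [->|zy] //.
    by apply: subset_closure.
  by apply: (Lc_full oW uW full y).
have -> : [set y] = ~` closure W.
  apply/seteqP; split => z.
    by move=> /= ->.
  move=> nz /=; apply: contrapT => zy; apply: nz; exact: subset_closure.
apply: closed_openC; exact: closed_closure.
Qed.

Lemma cen_core U : cen le U `<=` core le U.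
Proof. by move=> x [V [cb sub Vx]]; exists V; split => //; exact: bi_sup. Qed.

Lemma clopbiI A B : ClopBi le A -> ClopBi le B -> ClopBi le (A `&` B).
Proof.
move=> [cA uA dA] [cB uB dB]; split; first exact: clopenI.
  by move=> x y [Ax Bx] lexy; split; [exact: uA Ax lexy|exact: uB Bx lexy].
by move=> x y [Ay By] lexy; split; [exact: dA Ay lexy|exact: dB By lexy].
Qed.

Lemma clopsup_sub V W : ClopSUp le V -> open W -> upset le W ->
  V `<=` closure W -> V `<=` W.
Proof.
case: hX => [[hP _ _] _ _].
move=> [cV [clV uV msp]] oW uW sub a Va.
have [m [mm lema]] := min_exists hP clV Va.
have [om _] : clopen (down le [set m]) := msp _ mm.
have clm : closure W m by apply: sub; case: mm.
have nb : nbhs m (down le [set m]).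
  apply: open_nbhs_nbhs; split => //; exists m => //.
  by case: hP => _ [lr _ _] _; exact: lr.
have [w [Ww [w' /= -> lew]]] := clm _ nb.
exact: uW (uW _ _ Ww lew) lema.
Qed.

Lemma clopsup_cen V : ClopSUp le V -> V `<=` cen le V.
Proof.
move=> hV; apply: clopsup_sub => //; [exact: cen_open|exact: cen_up|].
case: hX => _ _ dens; apply: dens.
by case: hV => cV [_ uV _].
Qed.

Lemma stone_coherent : coherent_L_space le.
Proof.
have hX' := hX; case: hX' => hL Lc dens; split => //.
  move=> U hU; apply: subset_trans (dens _ hU) _.
  apply: closureS; exact: cen_core.
move=> U V hU hV; apply/seteqP; split => x.
  move=> [W [cuW wb Wx]]; split; exists W; split => // W' oW' uW' sub;
    apply: wb oW' uW' _ => //; apply: subset_trans sub.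
    exact: subIsetl.
  exact: subIsetr.
move=> [kU kV].
have [C1 [b1 s1 x1]] := ker_cen hU kU.
have [C2 [b2 s2 x2]] := ker_cen hV kV.
have b12 := clopbiI b1 b2.
exists (C1 `&` C2); split => //.
  by case: b12 => ? ? ?; split.
move=> W oW uW sub; apply: biset_wb => //.
apply: subset_trans sub; exact: setISS.
Qed.

End StoneL.

Theorem theorem5p14 :
  (forall (X : topologicalType) (le : X -> X -> Prop),
      stone_L_space le -> coherent_L_space le) /\
  (forall (X1 X2 : topologicalType) (le1 : X1 -> X1 -> Prop)
          (le2 : X2 -> X2 -> Prop) (f : X1 -> X2),
      stone_L_space le1 -> stone_L_space le2 -> L_morphism le1 le2 f ->
      coherent_morphism le1 le2 f).
Proof.
split; first by move=> X le hX; exact: stone_coherent.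
move=> X1 X2 le1 le2 f h1 h2 [cf mf _] U hU x [V [sV sub Vfx]].
have [C [[cC uC dC] subC Cfx]] := clopsup_cen h2 sV Vfx.
exists (f @^-1` C); split => //.
- apply: (bi_sup h1); split.
  + exact: preimage_clopen.
  + move=> a b Ca leab; exact: uC Ca (mf _ _ leab).
  + move=> a b Cb leab; exact: dC Cb (mf _ _ leab).
- by move=> z /subC /sub.
Qed.
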